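(* Let $k$ be a field and $(R,\mathfrak m_R,k)$, $(S,\mathfrak m_S,k)$ local rings containing $k$, each with residue field $k$. Let $\mathfrak m=\mathfrak m_R\otimes_kS+R\otimes_k\mathfrak m_S\subset R\otimes_kS$. Let $M$ be an $R$-module and $N$ an $S$-module. If $(M\otimes_kN)_{\mathfrak m}$ has a free summand as an $(R\otimes_kS)_{\mathfrak m}$-module, then $M$ has a free summand as an $R$-module and $N$ has a free summand as an $S$-module.
   Context: A module over a ring $T$ has a free summand if it has a direct summand isomorphic to $T$. *)

(* Defs.v *)
From HB Require Import structures.
From mathcomp Require Import all_boot all_order all_algebra.
Set Implicit Arguments. Unset Strict Implicit. Unset Printing Implicit Defensive.
Import GRing.Theory.
Local Open Scope ring_scope.

Definition is_unit (T : pzRingType) (x : T) : Prop := exists y : T, x * y = 1.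
Definition nonunit (T : pzRingType) (x : T) : Prop := ~ is_unit x.

(* (R, m_R, k) is a local ring with residue field k, R a commutative k-algebra:
   1 <> 0, the non-units form an ideal m_R (closure under addition suffices in a
   commutative ring), and k -> R/m_R is onto. *)
Definition local_resk (k : fieldType) (R : comAlgType k) : Prop :=
  (1 : R) <> 0 /\
  (forall x y : R, nonunit x -> nonunit y -> nonunit (x + y)) /\
  (forall r : R, exists c : k, nonunit (r - c%:A)).

(* T has a free summand: a direct summand isomorphic to T, i.e. T-linear
   maps f : T -> M and g : M -> T with g \o f = id. *)
Definition has_free_summand (T : pzRingType) (M : lmodType T) : Prop :=
  exists (f : T -> M) (g : M -> T),
    (forall a u v : T, f (a * u + v) = a *: f u + f v) /\
    (forall (a : T) (x y : M), g (a *: x + y) = a * g x + g y) /\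
    (forall t : T, g (f t) = t).

(* B = R (x)_k S, with t r s = r (x) s: t is k-bilinear, multiplicative,
   and universal among k-bilinear maps into k-vector spaces. *)
Definition is_tensor_alg (k : fieldType) (R S B : comAlgType k)
    (t : R -> S -> B) : Prop :=
  (forall (c : k) (r r' : R) (s : S), t (c *: r + r') s = c *: t r s + t r' s) /\
  (forall (c : k) (r : R) (s s' : S), t r (c *: s + s') = c *: t r s + t r s') /\
  t 1 1 = 1 /\
  (forall (r r' : R) (s s' : S), t r s * t r' s' = t (r * r') (s * s')) /\
  (forall (W : lmodType k) (h : R -> S -> W),
      (forall (c : k) (r r' : R) (s : S), h (c *: r + r') s = c *: h r s + h r' s) ->
      (forall (c : k) (r : R) (s s' : S), h r (c *: s + s') = c *: h r s + h r s') ->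
      exists H : B -> W,
        (forall (c : k) (b b' : B), H (c *: b + b') = c *: H b + H b') /\
        (forall r s, H (t r s) = h r s) /\
        (forall H' : B -> W,
            (forall (c : k) (b b' : B), H' (c *: b + b') = c *: H' b + H' b') ->
            (forall r s, H' (t r s) = h r s) -> forall b, H' b = H b)).

(* the ideal m = m_R (x) S + R (x) m_S of R (x)_k S, i.e. the set of finite
   sums of pure tensors r (x) s with r in m_R or s in m_S *)
Definition mideal (k : fieldType) (R S B : comAlgType k) (t : R -> S -> B)
    (b : B) : Prop :=
  exists (n : nat) (r : 'I_n -> R) (s : 'I_n -> S),
    (forall i, nonunit (r i) \/ nonunit (s i)) /\ b = \sum_(i < n) t (r i) (s i).

Definition is_rhom (U V : pzRingType) (f : U -> V) : Prop :=
  f 1 = 1 /\ (forall x y, f (x + y) = f x + f y) /\ (forall x y, f (x * y) = f x * f y).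

Definition is_localization (B A : comPzRingType) (P : B -> Prop) (iota : B -> A)
    : Prop :=
  is_rhom iota /\ (forall b, ~ P b -> is_unit (iota b)) /\
  (forall (C : comPzRingType) (phi : B -> C),
      is_rhom phi -> (forall b, ~ P b -> is_unit (phi b)) ->
      exists psi : A -> C, is_rhom psi /\ (forall b, psi (iota b) = phi b) /\
        (forall psi' : A -> C, is_rhom psi' -> (forall b, psi' (iota b) = phi b) ->
           forall a, psi' a = psi a)).

(* Q = M (x)_k N as a module over B = R (x)_k S, with tau x y = x (x) y:
   tau is k-bilinear, (r (x) s) . (x (x) y) = (r x) (x) (s y), and tau is
   universal among k-bilinear maps into k-vector spaces.  The k-structures on
   M, N, Q are those induced by k -> R, k -> S, k -> B. *)
Definition is_tensor_mod (k : fieldType) (R S B : comAlgType k)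
    (t : R -> S -> B) (M : lmodType R) (N : lmodType S) (Q : lmodType B)
    (tau : M -> N -> Q) : Prop :=
  (forall (c : k) (x x' : M) (y : N),
      tau ((c%:A : R) *: x + x') y = (c%:A : B) *: tau x y + tau x' y) /\
  (forall (c : k) (x : M) (y y' : N),
      tau x ((c%:A : S) *: y + y') = (c%:A : B) *: tau x y + tau x y') /\
  (forall (r : R) (s : S) (x : M) (y : N), t r s *: tau x y = tau (r *: x) (s *: y)) /\
  (forall (W : lmodType k) (h : M -> N -> W),
      (forall (c : k) (x x' : M) (y : N),
          h ((c%:A : R) *: x + x') y = c *: h x y + h x' y) ->
      (forall (c : k) (x : M) (y y' : N),
          h x ((c%:A : S) *: y + y') = c *: h x y + h x y') ->
      exists H : Q -> W,
        (forall (c : k) (q q' : Q), H ((c%:A : B) *: q + q') = c *: H q + H q') /\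
        (forall x y, H (tau x y) = h x y) /\
        (forall H' : Q -> W,
            (forall (c : k) (q q' : Q), H' ((c%:A : B) *: q + q') = c *: H' q + H' q') ->
            (forall x y, H' (tau x y) = h x y) -> forall q, H' q = H q)).

(* lambda : Q -> P is the localization of the B-module Q along iota : B -> A,
   i.e. P = Q (x)_B A (universal property among A-modules). *)
Definition is_mod_localization (B A : comPzRingType) (iota : B -> A)
    (Q : lmodType B) (P : lmodType A) (lambda : Q -> P) : Prop :=
  (forall (b : B) (q q' : Q), lambda (b *: q + q') = iota b *: lambda q + lambda q') /\
  (forall (W : lmodType A) (h : Q -> W),
      (forall (b : B) (q q' : Q), h (b *: q + q') = iota b *: h q + h q') ->
      exists H : P -> W,
        (forall (a : A) (p p' : P), H (a *: p + p') = a *: H p + H p') /\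
        (forall q, H (lambda q) = h q) /\
        (forall H' : P -> W,
            (forall (a : A) (p p' : P), H' (a *: p + p') = a *: H' p + H' p') ->
            (forall q, H' (lambda q) = h q) -> forall p, H' p = H p)).

(* Main.v *)
Require Import Defs.
From HB Require Import structures.
From mathcomp Require Import all_boot all_order all_algebra.
From mathcomp Require Import ring.
From Stdlib Require Import ClassicalEpsilon Classical.
Set Implicit Arguments. Unset Strict Implicit. Unset Printing Implicit Defensive.
Import GRing.Theory.
Local Open Scope ring_scope.

Record cpred (T : pzRingType) (V : lmodType T) := CPred {
  cp : V -> Prop; cp0 : cp 0; cpc : forall a x y, cp x -> cp y -> cp (a *: x + y) }.

Section SubMod.
Variables (T : pzRingType) (V : lmodType T) (C : cpred V).
Definition pb (v : V) : bool := if excluded_middle_informative (cp C v) then true else false.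
Lemma pbP v : pb v <-> cp C v.
Proof. by rewrite /pb; case: excluded_middle_informative. Qed.
Record subV := SubV { sv : V; svP : pb sv }.
HB.instance Definition _ := [isSub for sv].
HB.instance Definition _ := [Choice of subV by <:].
Lemma pb_closed : GRing.subsemimod_closed pb.
Proof.
apply: GRing.submod_closed_semi; split; first by apply/pbP; apply: cp0.
by move=> a u v /pbP hu /pbP hv; apply/pbP; apply: cpc.
Qed.
HB.instance Definition _ := GRing.SubChoice_isSubLmodule.Build T V pb subV pb_closed.
Lemma sv_lin a (x y : subV) : sv (a *: x + y) = a *: sv x + sv y.
Proof. by []. Qed.
Lemma sv_inj : injective sv.
Proof. exact: val_inj. Qed.
Definition mkSV (v : V) (h : cp C v) : subV := SubV (proj2 (pbP v) h).
Lemma svC (x : subV) : cp C (sv x).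
Proof. by apply/pbP; apply: svP. Qed.
End SubMod.

Lemma dbl0 (V : zmodType) (x : V) : x = x + x -> x = 0.
Proof. by move=> h; apply: (@addIr _ x); rewrite add0r -h. Qed.

Lemma algM (k : fieldType) (R : comAlgType k) (a b : k) : (a * b)%:A = a%:A * b%:A :> R.
Proof. by rewrite mulr_algl scalerA. Qed.

Definition klin (k : pzRingType) (U W : lmodType k) (H : U -> W) :=
  forall c x y, H (c *: x + y) = c *: H x + H y.

Section Klin.
Variables (k : pzRingType) (U W : lmodType k) (H : U -> W) (hH : klin H).
Lemma klin0 : H 0 = 0.
Proof. by apply: dbl0; rewrite -{1}(addr0 0) -{1}(scale1r 0) hH scale1r. Qed.
Lemma klinD x y : H (x + y) = H x + H y.
Proof. by rewrite -{1}(scale1r x) hH scale1r. Qed.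
Lemma klinZ c x : H (c *: x) = c *: H x.
Proof. by rewrite -[c *: x]addr0 hH klin0 addr0. Qed.
Lemma klin_sum n (F : 'I_n -> U) : H (\sum_(i < n) F i) = \sum_(i < n) H (F i).
Proof.
elim: n F => [|n IH] F; first by rewrite !big_ord0 klin0.
by rewrite !big_ord_recr /= klinD IH.
Qed.
End Klin.

Definition catf (X : Type) n1 n2 (a1 : 'I_n1 -> X) (a2 : 'I_n2 -> X) (i : 'I_(n1 + n2)) : X :=
  match split i with inl j => a1 j | inr j => a2 j end.

Lemma sum_cat (V : nmodType) (X Y : Type) (F : X -> Y -> V) n1 n2
  (r1 : 'I_n1 -> X) (s1 : 'I_n1 -> Y) (r2 : 'I_n2 -> X) (s2 : 'I_n2 -> Y) :
  \sum_(i < n1 + n2) F (catf r1 r2 i) (catf s1 s2 i) =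
  \sum_(i < n1) F (r1 i) (s1 i) + \sum_(i < n2) F (r2 i) (s2 i).
Proof.
rewrite big_split_ord; congr (_ + _); apply: eq_bigr => i _; rewrite /catf.
  by have /= -> := @unsplitK n1 n2 (inl i).
by have /= -> := @unsplitK n1 n2 (inr i).
Qed.

Section NU.
Variable T : comPzRingType.
Lemma nonunitN (x : T) : nonunit x -> nonunit (- x).
Proof. rewrite /nonunit /is_unit; by move=> h [y hy]; apply: h; exists (- y); rewrite -hy mulrN mulNr. Qed.
Lemma nonunitMl (x y : T) : nonunit x -> nonunit (y * x).
Proof. rewrite /nonunit /is_unit => h [z hz]; apply: h; exists (y * z); by rewrite mulrCA mulrA. Qed.
Lemma nonunit0 : (1 : T) <> 0 -> nonunit (0 : T).
Proof. rewrite /nonunit /is_unit; by move=> h [z]; rewrite mul0r => /esym. Qed.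
End NU.


Section Rho.
Variables (k : fieldType) (R : comAlgType k) (hR : local_resk R).
Definition rho (r : R) : k := projT1 (constructive_indefinite_description _ (proj2 (proj2 hR) r)).
Lemma rhoP r : nonunit (r - (rho r)%:A).
Proof. exact: (projT2 (constructive_indefinite_description _ (proj2 (proj2 hR) r))). Qed.
Lemma nonunitD (x y : R) : nonunit x -> nonunit y -> nonunit (x + y).
Proof. exact: (proj1 (proj2 hR)). Qed.
Lemma rho_uniq r c : nonunit (r - c%:A) -> rho r = c.
Proof.
move=> h.
have h3 : nonunit ((c - rho r)%:A : R).
  have -> : ((c - rho r)%:A : R) = (r - (rho r)%:A) + - (r - c%:A).
    rewrite scalerBl; ring.
  by apply: nonunitD; [apply: rhoP | apply: nonunitN].
case: (eqVneq c (rho r)) => // hne; exfalso; apply: h3.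
exists ((c - rho r)^-1)%:A; rewrite -algM mulfV ?scale1r //.
by rewrite subr_eq0.
Qed.
Lemma rho_lin c r r' : rho (c *: r + r') = c * rho r + rho r'.
Proof.
apply: rho_uniq.
have -> : (c *: r + r') - (c * rho r + rho r')%:A = c%:A * (r - (rho r)%:A) + (r' - (rho r')%:A).
  rewrite -[c *: r]mulr_algl scalerDl algM. ring.
by apply: nonunitD; [apply: nonunitMl; apply: rhoP | apply: rhoP].
Qed.
Lemma rhoD r r' : rho (r + r') = rho r + rho r'.
Proof. by rewrite -{1}(scale1r r) rho_lin mul1r. Qed.
Lemma rhoM r r' : rho (r * r') = rho r * rho r'.
Proof.
apply: rho_uniq.
have -> : r * r' - (rho r * rho r')%:A = r' * (r - (rho r)%:A) + (rho r)%:A * (r' - (rho r')%:A).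
  rewrite algM. ring.
by apply: nonunitD; apply: nonunitMl; apply: rhoP.
Qed.
Lemma rho_alg c : rho (c%:A) = c.
Proof. by apply: rho_uniq; rewrite subrr; apply: nonunit0; exact: (proj1 hR). Qed.
Lemma rho1 : rho 1 = 1.
Proof. by rewrite -(scale1r (1 : R)) rho_alg. Qed.
Lemma rho_nonunit r : nonunit r -> rho r = 0.
Proof. by move=> h; apply: rho_uniq; rewrite scale0r subr0. Qed.
End Rho.


Section Ext.
Variables (k : fieldType) (R S B : comAlgType k) (t : R -> S -> B) (ht : is_tensor_alg t).

Lemma tensor_ext (W : lmodType k) (H1 H2 : B -> W) : klin H1 -> klin H2 ->
  (forall r s, H1 (t r s) = H2 (t r s)) -> forall b, H1 b = H2 b.
Proof.
case: ht => [tl [tr [_ [_ tUP]]]] l1 l2 e.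
have [H [_ [_ Hu]]] := tUP W (fun r s => H1 (t r s))
  (fun c r r' s => etrans (f_equal H1 (tl c r r' s)) (l1 _ _ _))
  (fun c r s s' => etrans (f_equal H1 (tr c r s s')) (l1 _ _ _)).
move=> b; rewrite (Hu H1 l1 (fun _ _ => erefl)) (Hu H2 l2) //.
Qed.

Lemma tlin_l s : klin (fun r => t r s).
Proof. by case: ht => [tl _] c r r'; apply: tl. Qed.
Lemma tlin_r r : klin (t r).
Proof. by case: ht => [_ [tr _]] c s s'; apply: tr. Qed.

Definition tspan (b : B) := exists n (r : 'I_n -> R) (s : 'I_n -> S),
  b = \sum_(i < n) t (r i) (s i).

Lemma tspan0 : tspan 0.
Proof. by exists 0%N, (fun _ => 0), (fun _ => 0); rewrite big_ord0. Qed.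
Lemma tspanc a x y : tspan x -> tspan y -> tspan (a *: x + y).
Proof.
move=> [n [r [s ->]]] [m [r' [s' ->]]].
exists (n + m)%N, (catf (fun i => a *: r i) r'), (catf s s').
rewrite sum_cat scaler_sumr; congr (_ + _); apply: eq_bigr => i _.
by rewrite (klinZ (tlin_l (s i))).
Qed.
Definition tspanC : cpred B := CPred tspan0 tspanc.

Lemma tensor_gen b : tspan b.
Proof.
case: (ht) => [tl [tr [_ [_ tUP]]]].
have h1 : forall r s, cp tspanC (t r s).
  by move=> r s; exists 1%N, (fun _ => r), (fun _ => s); rewrite big_ord1.
pose h r s := mkSV (h1 r s).
have hl1 : forall c r r' s, h (c *: r + r') s = c *: h r s + h r' s.
  by move=> c r r' s; apply: sv_inj; rewrite sv_lin /=; apply: tl.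
have hl2 : forall c r s s', h r (c *: s + s') = c *: h r s + h r s'.
  by move=> c r s s'; apply: sv_inj; rewrite sv_lin /=; apply: tr.
have [H [Hl [Hh _]]] := tUP _ h hl1 hl2.
have e : forall b, sv (H b) = b.
  apply: (tensor_ext (H1 := fun b => sv (H b)) (H2 := id)).
  - by move=> c x y /=; rewrite Hl sv_lin.
  - by [].
  - by move=> r s; rewrite Hh.
by rewrite -(e b); exact: (svC (H b)).
Qed.
End Ext.

Lemma tensor_mod_ext (k : fieldType) (R S B : comAlgType k)
    (t : R -> S -> B) (M : lmodType R) (N : lmodType S) (Q : lmodType B)
    (tau : M -> N -> Q) (htau : is_tensor_mod t tau) (W : lmodType k) (H1 H2 : Q -> W) :
  (forall (c : k) (q q' : Q), H1 ((c%:A : B) *: q + q') = c *: H1 q + H1 q') ->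
  (forall (c : k) (q q' : Q), H2 ((c%:A : B) *: q + q') = c *: H2 q + H2 q') ->
  (forall x y, H1 (tau x y) = H2 (tau x y)) -> forall q, H1 q = H2 q.
Proof.
case: htau => [tl [tr [_ tUP]]] l1 l2 e.
have [H [_ [_ Hu]]] := tUP W (fun x y => H1 (tau x y))
  (fun c x x' y => etrans (f_equal H1 (tl c x x' y)) (l1 _ _ _))
  (fun c x y y' => etrans (f_equal H1 (tr c x y y')) (l1 _ _ _)).
move=> q; rewrite (Hu H1 l1 (fun _ _ => erefl)) (Hu H2 l2) //.
Qed.

Lemma loc_mod_ext (B A : comPzRingType) (iota : B -> A)
    (Q : lmodType B) (P : lmodType A) (lambda : Q -> P)
    (hl : is_mod_localization iota lambda) (W : lmodType A) (H1 H2 : P -> W) :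
  klin H1 -> klin H2 -> (forall q, H1 (lambda q) = H2 (lambda q)) -> forall p, H1 p = H2 p.
Proof.
case: hl => [ll lUP] l1 l2 e.
have [H [_ [_ Hu]]] := lUP W (fun q => H1 (lambda q))
  (fun b q q' => etrans (f_equal H1 (ll b q q')) (l1 _ _ _)).
move=> p; rewrite (Hu H1 l1 (fun _ => erefl)) (Hu H2 l2) //.
Qed.


Lemma half_lemma (k : fieldType) (R S : comAlgType k)
  (hR : local_resk R) (hS : local_resk S)
  (M : lmodType R) (N : lmodType S)
  (B : comAlgType k) (t : R -> S -> B) (ht : is_tensor_alg t)
  (A : comPzRingType) (iota : B -> A) (hiota : is_localization (mideal t) iota)
  (Q : lmodType B) (tau : M -> N -> Q) (htau : is_tensor_mod t tau)
  (P : lmodType A) (lambda : Q -> P) (hlambda : is_mod_localization iota lambda) :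
  has_free_summand P -> has_free_summand N.
Proof.
move=> [fP [gP [fPl [gPl gf]]]].
have [tl [tr [t11 [tM tUP]]]] := ht.
have [[i1 [iD iM]] [iU iUP]] := hiota.
have [ll lUP] := hlambda.
have [tauL [tauR [tauM tauUP]]] := htau.
pose h0 (r : R) (s : S) : S := rho hR r *: s.
have h0l : forall c r r' s, h0 (c *: r + r') s = c *: h0 r s + h0 r' s.
  by move=> c r r' s; rewrite /h0 rho_lin scalerDl scalerA.
have h0r : forall c r s s', h0 r (c *: s + s') = c *: h0 r s + h0 r s'.
  by move=> c r s s'; rewrite /h0 scalerDr !scalerA mulrC.
have [psi [psil [psit _]]] := tUP S h0 h0l h0r.
have psiK : klin psi := psil.
have psi1 : psi 1 = 1 by rewrite -t11 psit /h0 rho1 scale1r.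
have psiMt : forall b r s, psi (b * t r s) = psi b * psi (t r s).
  move=> b r s.
  apply: (tensor_ext ht (H1 := fun b => psi (b * t r s)) (H2 := fun b => psi b * psi (t r s))).
  - by move=> c x y /=; rewrite mulrDl -scalerAl psiK.
  - by move=> c x y /=; rewrite psiK mulrDl scalerAl.
  - by move=> r' s' /=; rewrite tM !psit /h0 rhoM -scalerAl -scalerAr scalerA.
have psiM : forall b b', psi (b * b') = psi b * psi b'.
  move=> b; apply: (tensor_ext ht (H1 := fun b' => psi (b * b')) (H2 := fun b' => psi b * psi b')).
  - by move=> c x y /=; rewrite mulrDr -scalerAr psiK.
  - by move=> c x y /=; rewrite psiK mulrDr scalerAr.
  - by move=> r s /=; rewrite psiMt.
have psiD := klinD psiK.
have psiRh : is_rhom psi by split; [|split].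
have hmid : forall b, nonunit (psi b) -> mideal t b.
  move=> b nb; have [n [r [s eb]]] := tensor_gen ht b.
  pose m i := r i - (rho hR (r i))%:A.
  pose s0 := \sum_(i < n) rho hR (r i) *: s i.
  have ps : psi b = s0 by rewrite eb (klin_sum psiK); apply: eq_bigr => i _; rewrite psit.
  have eb2 : b = \sum_(i < n) t (m i) (s i) + t 1 s0.
    rewrite /s0 (klin_sum (tlin_r ht 1)) -big_split /= eb; apply: eq_bigr => i _.
    rewrite (klinZ (tlin_r ht 1)) -(klinZ (tlin_l ht (s i))) -(klinD (tlin_l ht (s i))).
    by rewrite /m subrK.
  exists (n + 1)%N, (catf m (fun _ => 1)), (catf s (fun _ => s0)); split.
  - move=> i; rewrite /catf; case: split => j; [left; apply: rhoP | right; rewrite -ps //].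
  - by rewrite sum_cat big_ord1.
have iUnit : forall b, ~ mideal t b -> is_unit (psi b).
  by move=> b nb; apply: NNPP => nu; apply: nb; apply: hmid.
have [pi [[pi1 [piD piM]] [piI _]]] := iUP S psi psiRh iUnit.
have piIt : forall r s, pi (iota (t r s)) = rho hR r *: s by move=> r s; rewrite piI psit.
pose chi a := rho hS (pi a).
have chi1 : chi 1 = 1 by rewrite /chi pi1 rho1.
have chiD : forall a b, chi (a + b) = chi a + chi b by move=> a b; rewrite /chi piD rhoD.
have chiM : forall a b, chi (a * b) = chi a * chi b by move=> a b; rewrite /chi piM rhoM.
have chiA : forall c, chi (iota (c%:A)) = c.
  by move=> c; rewrite /chi piI (klinZ psiK) psi1 rho_alg.
have gP0 : gP 0 = 0.
  by apply: dbl0; rewrite -{1}(addr0 (0 : P)) -{1}(scale1r (0 : P)) gPl mul1r.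
have gPZ : forall a p, gP (a *: p) = a * gP p by move=> a p; rewrite -[a *: p]addr0 gPl gP0 addr0.
have lam0 : lambda 0 = 0.
  by apply: dbl0; rewrite -{1}(addr0 (0 : Q)) -{1}(scale1r (0 : Q)) ll i1 scale1r.
have lamZ : forall b q, lambda (b *: q) = iota b *: lambda q.
  by move=> b q; rewrite -[b *: q]addr0 ll lam0 addr0.
apply: NNPP => nF.
have allnu : forall x y, nonunit (pi (gP (lambda (tau x y)))).
  move=> x y [w hw]; apply: nF.
  pose g y' := pi (gP (lambda (tau x y'))).
  exists (fun s => (s * w) *: y), g; split; [|split].
  - by move=> a u v; rewrite mulrDl scalerDl scalerA mulrA.
  - move=> a y1 y2; rewrite /g.
    have -> : tau x (a *: y1 + y2) = t 1 a *: tau x y1 + tau x y2.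
      by rewrite tauM scale1r; have := tauR 1 x (a *: y1) y2; rewrite !scale1r.
    by rewrite ll gPl piD piM piIt rho1 scale1r.
  - move=> s; rewrite /g.
    have -> : tau x ((s * w) *: y) = t 1 (s * w) *: tau x y by rewrite tauM scale1r.
    by rewrite lamZ gPZ piM piIt rho1 scale1r -mulrA (mulrC w) hw mulr1.
have rho0 : rho hS 0 = 0 by apply: rho_nonunit; apply: nonunit0; exact: (proj1 hS).
have chiQ : forall q, chi (gP (lambda q)) = 0.
  apply: (tensor_mod_ext htau (W := k^o) (H1 := fun q => chi (gP (lambda q))) (H2 := fun _ => 0)).
  - by move=> c q q' /=; rewrite ll gPl chiD chiM chiA.
  - by move=> c q q' /=; rewrite scaler0 addr0.
  - by move=> x y /=; rewrite /chi rho_nonunit.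
have cp0' : chi (gP 0) = 0.
  by rewrite gP0 /chi; have -> : pi 0 = 0 by apply: dbl0; rewrite -piD addr0.
have cpc' : forall a x y, chi (gP x) = 0 -> chi (gP y) = 0 -> chi (gP (a *: x + y)) = 0.
  by move=> a x y hx hy; rewrite gPl chiD chiM hx hy mulr0 addr0.
pose C := @CPred A P (fun p => chi (gP p) = 0) cp0' cpc'.
pose h q := mkSV (C := C) (chiQ q).
have hl : forall b q q', h (b *: q + q') = iota b *: h q + h q'.
  by move=> b q q'; apply: sv_inj; rewrite sv_lin /=; apply: ll.
have [H [Hl [Hh _]]] := lUP _ h hl.
have e : forall p, sv (H p) = p.
  apply: (loc_mod_ext hlambda (H1 := fun p => sv (H p)) (H2 := id)).
  - by move=> a x y /=; rewrite Hl sv_lin.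
  - by [].
  - by move=> q /=; rewrite Hh.
have := svC (H (fP 1)); rewrite /= (e (fP 1)) gf chi1 => /eqP.
by rewrite oner_eq0.
Qed.


Lemma swap_alg (k : fieldType) (R S B : comAlgType k) (t : R -> S -> B) :
  is_tensor_alg t -> is_tensor_alg (fun s r => t r s).
Proof.
move=> [tl [tr [t11 [tM tUP]]]]; split; [|split; [|split; [|split]]] => //.
move=> W h hl hr.
have [H [Hl [Ht Hu]]] := tUP W (fun r s => h s r) (fun c r r' s => hr c s r r') (fun c r s s' => hl c s s' r).
exists H; split; [exact: Hl | split; [by move=> s r; apply: Ht |]].
by move=> H' l' e'; apply: Hu => // r s; apply: e'.
Qed.

Lemma swap_mideal (k : fieldType) (R S B : comAlgType k) (t : R -> S -> B) b :
  mideal (fun s r => t r s) b -> mideal t b.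
Proof.
move=> [n [s [r [h e]]]]; exists n, r, s; split => // i.
by case: (h i); [right | left].
Qed.

Lemma swap_loc (k : fieldType) (R S B : comAlgType k) (t : R -> S -> B)
  (A : comPzRingType) (iota : B -> A) :
  is_localization (mideal t) iota -> is_localization (mideal (fun s r => t r s)) iota.
Proof.
move=> [h1 [h2 h3]]; split => //; split.
  by move=> b nb; apply: h2 => m; apply: nb; move: m; apply: swap_mideal.
move=> C phi hphi hu; apply: h3 => // b nb; apply: hu => m; apply: nb.
move: m; move=> [n [r [s [h e]]]]; exists n, s, r; split => // i.
by case: (h i); [right | left].
Qed.

Lemma swap_mod (k : fieldType) (R S B : comAlgType k)
    (t : R -> S -> B) (M : lmodType R) (N : lmodType S) (Q : lmodType B)
    (tau : M -> N -> Q) :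
  is_tensor_mod t tau -> is_tensor_mod (fun s r => t r s) (fun y x => tau x y).
Proof.
move=> [tl [tr [tM tUP]]]; split; [|split; [|split]].
- by move=> c y y' x; apply: tr.
- by move=> c y x x'; apply: tl.
- by move=> s r y x; apply: tM.
move=> W h hl hr.
have [H [Hl [Ht Hu]]] := tUP W (fun x y => h y x) (fun c x x' y => hr c y x x') (fun c x y y' => hl c y y' x).
exists H; split; [exact: Hl | split; [by move=> y x; apply: Ht |]].
by move=> H' l' e'; apply: Hu => // x y; apply: e'.
Qed.

Theorem lemma6p5 (k : fieldType) (R S : comAlgType k)
  (hR : local_resk R) (hS : local_resk S)
  (M : lmodType R) (N : lmodType S)
  (B : comAlgType k) (t : R -> S -> B) (ht : is_tensor_alg t)
  (A : comPzRingType) (iota : B -> A) (hiota : is_localization (mideal t) iota)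
  (Q : lmodType B) (tau : M -> N -> Q) (htau : is_tensor_mod t tau)
  (P : lmodType A) (lambda : Q -> P) (hlambda : is_mod_localization iota lambda) :
  has_free_summand P -> has_free_summand M /\ has_free_summand N.
Proof.
move=> hP; split.
  exact: (@half_lemma k S R hS hR N M B _ (swap_alg ht) A iota (swap_loc hiota) Q _ (swap_mod htau) P lambda hlambda hP).
exact: (@half_lemma k R S hR hS M N B t ht A iota hiota Q tau htau P lambda hlambda hP).
Qed.
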